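(* Let $n\ge1$, let $f_1,\dots,f_n:\mathbb{R}^d\to\mathbb{R}$ be $L$-smooth (i.e. $\|\nabla f_i(x)-\nabla f_i(y)\|\le L\|x-y\|$ for all $x,y$), and $f=\frac1n\sum_i f_i$. Let $x_0,\dots,x_{T-1}$, $\nabla_0,\dots,\nabla_{T-1}$ and $\gamma_0,\dots,\gamma_{T-1}$ be the iterates, gradient estimators and step-sizes produced by AdaSpider (described in the context) with input $x_0$, $\beta_0>0$, $G_0>0$. Then \[ \mathbb{E}\Big[\sum_{t=0}^{T-1}\gamma_t\|\nabla_t-\nabla f(x_t)\|^2\Big]\le L^2n\,\mathbb{E}\Big[\sum_{t=0}^{T-1}\gamma_t^3\|\nabla_t\|^2\Big]. \]
   Context: $\|\cdot\|$ is the Euclidean norm. AdaSpider: input $x_0\in\mathbb{R}^d$, $\beta_0>0$, $G_0>0$, horizon $T\ge1$. For $t=0,1,\dots,T-1$: if $t \bmod n=0$, set $\nabla_t:=\nabla f(x_t)$; otherwise pick $i_t\in\{1,\dots,n\}$ uniformly at random (independently of the past) and set $\nabla_t:=\nabla f_{i_t}(x_t)-\nabla f_{i_t}(x_{t-1})+\nabla_{t-1}$. Then set $\gamma_t:=1\big/\big(n^{1/4}\beta_0\sqrt{n^{1/2}G_0^2+\sum_{s=0}^t\|\nabla_s\|^2}\big)$ and $x_{t+1}:=x_t-\gamma_t\nabla_t$. *)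

(* Defs.v *)
From HB Require Import structures.
From mathcomp Require Import all_boot all_order all_algebra.
From mathcomp Require Import all_classical all_reals all_analysis.
Set Implicit Arguments. Unset Strict Implicit. Unset Printing Implicit Defensive.
Import Order.TTheory GRing.Theory Num.Theory.
Local Open Scope ring_scope.

Section AdaSpider.
Variables (R : realType) (d n : nat).
Notation vec := 'rV[R]_d.

Definition dotv (u v : vec) : R := \sum_(j < d) u ord0 j * v ord0 j.
Definition sqnorm (v : vec) : R := dotv v v.
Definition enorm (v : vec) : R := Num.sqrt (sqnorm v).

Definition is_gradient (h : vec -> R) (g : vec -> vec) : Prop :=
  forall x, differentiable h x /\ forall v, 'd h x v = dotv v (g x).

Definition lipschitz_grad (L : R) (g : vec -> vec) : Prop :=
  forall x y, enorm (g x - g y) <= L * enorm (x - y).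

(** gradient of f = (1/n) sum_i f_i, given the gradients G i of the f_i *)
Definition avg_grad (G : 'I_n -> vec -> vec) (x : vec) : vec :=
  n%:R^-1 *: \sum_(i < n) G i x.

(** step size from the running sum S_t = sum_{s<=t} ||nabla_s||^2 *)
Definition ada_step (beta0 G0 Ssum : R) : R :=
  1 / (Num.sqrt (Num.sqrt n%:R) * beta0 *
       Num.sqrt (Num.sqrt n%:R * G0 ^+ 2 + Ssum)).

(** State at time t: (x_t, nabla_t, S_t), given the sampled indices
    w t = i_t (only used when t mod n <> 0). *)
Fixpoint ada_state (G : 'I_n -> vec -> vec) (x0 : vec) (beta0 G0 : R)
    (w : nat -> 'I_n) (t : nat) : vec * vec * R :=
  match t with
  | 0 => let g := avg_grad G x0 in (x0, g, sqnorm g)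
  | t'.+1 =>
      let: (x, g, Ssum) := ada_state G x0 beta0 G0 w t' in
      let x' := x - ada_step beta0 G0 Ssum *: g in
      let g' := if (t'.+1 %% n == 0)%N then avg_grad G x'
                else G (w t'.+1) x' - G (w t'.+1) x + g in
      (x', g', Ssum + sqnorm g')
  end.

Definition ada_x G x0 beta0 G0 w t := (ada_state G x0 beta0 G0 w t).1.1.
Definition ada_nabla G x0 beta0 G0 w t := (ada_state G x0 beta0 G0 w t).1.2.
Definition ada_gamma G x0 beta0 G0 w t :=
  ada_step beta0 G0 (ada_state G x0 beta0 G0 w t).2.

(** The random indices: omega : {ffun 'I_T -> 'I_n} drawn uniformly, i.e.
    i_0,...,i_{T-1} i.i.d. uniform on {1..n} (here 'I_n = {0..n-1}). *)
Definition pick_idx (T : nat) (hn : (0 < n)%N) (omega : {ffun 'I_T -> 'I_n})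
    (t : nat) : 'I_n :=
  if insub t is Some j then omega j else Ordinal hn.

Definition Eunif (T : nat) (X : {ffun 'I_T -> 'I_n} -> R) : R :=
  (\sum_(omega : {ffun 'I_T -> 'I_n}) X omega) /
    #|{: {ffun 'I_T -> 'I_n}}|%:R.

End AdaSpider.

(* Main.v *)
Require Import Defs.
From HB Require Import structures.
From mathcomp Require Import all_boot all_order all_algebra.
From mathcomp Require Import all_classical all_reals all_analysis.
From mathcomp Require Import zify ring lra.
Import Order.TTheory GRing.Theory Num.Theory.
Set Implicit Arguments. Unset Strict Implicit.
Local Open Scope ring_scope.
Lemma sum_shift_le (R : realDomainType) (b : nat -> R) (k T : nat) :
  (forall t, 0 <= b t) ->
  \sum_(t < T) (if (k < t)%N then b (t - k.+1)%N else 0) <= \sum_(t < T) b t.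
Proof.
move=> b0.
have -> : \sum_(t < T) (if (k < t)%N then b (t - k.+1)%N else 0)
          = \sum_(t < T - k.+1) b t.
  elim: T => [|T IH]; first by rewrite !big_ord0.
  rewrite big_ord_recr /= IH.
  case: ltnP => hk.
    by rewrite subSn // big_ord_recr.
  by rewrite addr0; have -> : (T.+1 - k.+1 = T - k.+1)%N by rewrite subSS; lia.
rewrite (big_ord_widen T b (leq_subr _ _)) big_mkcond /=.
apply: ler_sum => i _; case: ifP => _ //.
Qed.

Lemma seq_bound (R : realDomainType) (n T : nat) (u b : nat -> R) :
  (0 < n)%N -> (forall t, 0 <= b t) -> u 0%N <= 0 ->
  (forall t, (t.+1 < T)%N ->
     u t.+1 <= if (t.+1 %% n == 0)%N then 0 else u t + b t) ->
  \sum_(t < T) u t <= n%:R * \sum_(t < T) b t.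
Proof.
move=> hn b0 u0 hrec.
pose y t := \sum_(k < t %% n) b (t - k.+1)%N.
have y0 t : 0 <= y t by apply: sumr_ge0.
have c1 t : (t < T)%N -> u t <= y t.
  elim: t => [_|t IH ht]; first by rewrite /y mod0n big_ord0.
  have := hrec t ht; case: eqP => hm; first by move=> h; apply: le_trans h (y0 _).
  move=> h; apply: (le_trans h).
  have hm' : (t.+1 %% n = (t %% n).+1)%N.
    by move: hm; rewrite modnS; case: ifP.
  rewrite /y hm' big_ord_recl /= subn1 /= addrC lerD2l.
  have := IH (ltnW ht); rewrite /y => h2; apply: (le_trans h2).
  by apply: Order.POrderTheory.le_refl.
have c2 t : y t <= \sum_(k < n) (if (k < t)%N then b (t - k.+1)%N else 0).
  rewrite /y (big_ord_widen n (fun k => b (t - k.+1)%N) (ltnW (ltn_pmod t hn))).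
  rewrite big_mkcond /=.
  apply: ler_sum => k _; case: ifP => hk; last by case: ifP.
  by rewrite (leq_trans hk (leq_mod _ _)).
apply: (le_trans (y := \sum_(t < T) \sum_(k < n) (if (k < t)%N then b (t - k.+1)%N else 0))).
  by apply: ler_sum => t _; apply: le_trans (c1 _ (ltn_ord t)) (c2 t).
rewrite exchange_big /=.
apply: (le_trans (y := \sum_(k < n) \sum_(t < T) b t)).
  by apply: ler_sum => k _; apply: sum_shift_le.
by rewrite sumr_const card_ord mulr_natl.
Qed.
Lemma sqnorm_ge0 (R : realType) (d : nat) (v : 'rV[R]_d) : 0 <= sqnorm v.
Proof. by apply: sumr_ge0 => j _; rewrite -expr2 sqr_ge0. Qed.

Lemma sqnorm0 (R : realType) (d : nat) : sqnorm (0 : 'rV[R]_d) = 0.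
Proof. by apply: big1 => j _; rewrite mxE mul0r. Qed.

Lemma sqnorm_step (R : realType) (d : nat) (x g : 'rV[R]_d) (a : R) :
  sqnorm (x - a *: g - x) = a ^+ 2 * sqnorm g.
Proof.
rewrite /sqnorm /dotv mulr_sumr; apply: eq_bigr => j _; rewrite !mxE; ring.
Qed.

Lemma sqnorm_enorm (R : realType) (d : nat) (v : 'rV[R]_d) :
  sqnorm v = enorm v ^+ 2.
Proof. by rewrite /enorm sqr_sqrtr // sqnorm_ge0. Qed.

Lemma scalar_var (R : realType) (n : nat) (c m : R) (v : 'I_n -> R) :
  n%:R * m = \sum_i v i ->
  \sum_i (c + v i - m) * (c + v i - m) <= n%:R * (c * c) + \sum_i v i * v i.
Proof.
move=> hm.
have -> : \sum_i (c + v i - m) * (c + v i - m) =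
   \sum_(i < n) ((c - m) ^+ 2 + 2%:R * (c - m) * v i + v i * v i).
  by apply: eq_bigr => i _; ring.
rewrite !big_split /= sumr_const card_ord -mulr_sumr -hm.
have : 0 <= n%:R * (m * m) :> R by apply: mulr_ge0 => //; rewrite -expr2 sqr_ge0.
rewrite mulr_natl.
move=> h.
have -> : (c - m) ^+ 2 *+ n = n%:R * ((c - m) ^+ 2) by rewrite mulr_natl.
lra.
Qed.

Lemma vec_var (R : realType) (d n : nat) (c : 'rV[R]_d) (v : 'I_n -> 'rV[R]_d) :
  (0 < n)%N ->
  \sum_i sqnorm (c + v i - n%:R^-1 *: \sum_k v k)
    <= n%:R * sqnorm c + \sum_i sqnorm (v i).
Proof.
move=> hn.
rewrite /sqnorm /dotv exchange_big [X in _ <= _ + X]exchange_big /= mulr_sumr -big_split /=.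
apply: ler_sum => j _.
under eq_bigr do rewrite !mxE summxE.
apply: scalar_var.
by rewrite mulrA mulfV ?mul1r ?summxE // pnatr_eq0 -lt0n.
Qed.

Lemma resample (R : realType) (T n : nat) (hn : (0 < n)%N) (s : 'I_T)
  (F : {ffun 'I_T -> 'I_n} -> R) :
  n%:R * \sum_w F w = \sum_(w : {ffun 'I_T -> 'I_n}) \sum_(i : 'I_n) F [ffun x => if x == s then i else w x].
Proof.
case: n hn F => [//|m] _ F.
rewrite mulr_natl.
pose psi (k : 'I_m.+1) (w : {ffun 'I_T -> 'I_m.+1}) :=
  [ffun x => if x == s then w x + k else w x].
have psiI k : injective (psi k).
  move=> w1 w2 /ffunP h; apply/ffunP => x; have := h x; rewrite !ffunE.
  by case: eqP => // _; apply: addIr.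
have e1 k : \sum_w F w = \sum_w F (psi k w) by rewrite (reindex_inj (psiI k)).
have -> : (\sum_w F w) *+ m.+1 = (\sum_w F w) *+ #|'I_m.+1| by rewrite card_ord.
rewrite -sumr_const.
rewrite (eq_bigr (fun k => \sum_w F (psi k w))); last by move=> k _; exact: e1.
rewrite exchange_big /=; apply: eq_bigr => w _.
rewrite [RHS](reindex_inj (addrI (w s))); apply: eq_bigr => k _.
congr F; apply/ffunP => x; rewrite !ffunE; case: eqP => [->|] //.
Qed.
Lemma state_dep (R : realType) (d n : nat) (G : 'I_n -> 'rV[R]_d -> 'rV[R]_d)
  x0 b G0 (w1 w2 : nat -> 'I_n) t :
  (forall u, (u <= t)%N -> w1 u = w2 u) ->
  ada_state G x0 b G0 w1 t = ada_state G x0 b G0 w2 t.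
Proof.
elim: t => [//|t IH] h /=.
by rewrite IH ?h // => u hu; apply: h; apply: leqW.
Qed.

Definition upd (T n : nat) (w : {ffun 'I_T -> 'I_n}) (s : 'I_T) (i : 'I_n) :
  {ffun 'I_T -> 'I_n} := [ffun x => if x == s then i else w x].

Lemma pick_upd_other (T n : nat) (hn : (0 < n)%N) w (s : 'I_T) i (u : nat) :
  u != val s -> pick_idx hn (upd w s i) u = pick_idx hn w u.
Proof.
move=> hu; rewrite /pick_idx; case: insubP => [j _ hj|] //.
rewrite ffunE; case: eqP => // hjs; move: hu; by rewrite -hj hjs eqxx.
Qed.

Lemma pick_upd_s (T n : nat) (hn : (0 < n)%N) w (s : 'I_T) i :
  pick_idx hn (upd w s i) (val s) = i.
Proof.
rewrite /pick_idx; case: insubP => [j _ hj|]; last by rewrite ltn_ord.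
by rewrite ffunE (_ : j = s) ?eqxx //; apply: val_inj.
Qed.

Lemma S_ge0 (R : realType) (d n : nat) (G : 'I_n -> 'rV[R]_d -> 'rV[R]_d)
  x0 b G0 w t : 0 <= (ada_state G x0 b G0 w t).2.
Proof.
elim: t => [|t IH] /=; first exact: sqnorm_ge0.
move: IH; case: (ada_state G x0 b G0 w t) => [[x g] S] /= IH.
by apply: addr_ge0 => //; apply: sqnorm_ge0.
Qed.

Lemma step_pos (R : realType) (n : nat) (b G0 S : R) :
  (0 < n)%N -> 0 < b -> 0 < G0 -> 0 <= S -> 0 < ada_step n b G0 S.
Proof.
move=> hn hb hG hS; rewrite /ada_step div1r invr_gt0.
have h1 : 0 < Num.sqrt (n%:R : R) by rewrite sqrtr_gt0 ltr0n.
apply: mulr_gt0; first by apply: mulr_gt0 => //; rewrite sqrtr_gt0.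
rewrite sqrtr_gt0; apply: ltr_wpDr => //; apply: mulr_gt0 => //.
by rewrite exprn_gt0.
Qed.

Lemma step_mono (R : realType) (n : nat) (b G0 S1 S2 : R) :
  (0 < n)%N -> 0 < b -> 0 < G0 -> 0 <= S1 -> S1 <= S2 ->
  ada_step n b G0 S2 <= ada_step n b G0 S1.
Proof.
move=> hn hb hG hS h12.
have hS2 : 0 <= S2 by apply: le_trans h12.
have := step_pos hn hb hG hS; have := step_pos hn hb hG hS2.
rewrite /ada_step !div1r !invr_gt0 => p2 p1.
rewrite lef_pV2 ?posrE //.
have h1 : 0 < Num.sqrt (n%:R : R) by rewrite sqrtr_gt0 ltr0n.
apply: ler_wpM2l; first by apply: mulr_ge0; [exact: sqrtr_ge0 | exact: ltW].
by apply: ler_wsqrtr; rewrite lerD2l.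
Qed.

Lemma gamma_mono (R : realType) (d n : nat) (hn : (0 < n)%N) (G : 'I_n -> 'rV[R]_d -> 'rV[R]_d)
  x0 b G0 w t : 0 < b -> 0 < G0 ->
  ada_gamma G x0 b G0 w t.+1 <= ada_gamma G x0 b G0 w t.
Proof.
move=> hb hG; rewrite /ada_gamma /=.
have := S_ge0 G x0 b G0 w t.
case: (ada_state G x0 b G0 w t) => [[x g] S] /= hS.
by apply: step_mono => //; rewrite lerDl sqnorm_ge0.
Qed.

Lemma gamma_pos (R : realType) (d n : nat) (hn : (0 < n)%N) (G : 'I_n -> 'rV[R]_d -> 'rV[R]_d)
  x0 b G0 w t : 0 < b -> 0 < G0 -> 0 < ada_gamma G x0 b G0 w t.
Proof. by move=> hb hG; apply: step_pos => //; apply: S_ge0. Qed.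

Lemma step_avg (R : realType) (d n : nat) (hn : (0 < n)%N)
  (G : 'I_n -> 'rV[R]_d -> 'rV[R]_d) x0 b G0 (L : R)
  (hL : forall i, lipschitz_grad L (G i)) (hb : 0 < b) (hG : 0 < G0)
  (T : nat) (om : {ffun 'I_T -> 'I_n}) (s : 'I_T) (t : nat)
  (hs : val s = t.+1) (hmod : (t.+1 %% n != 0)%N) :
  \sum_i ada_gamma G x0 b G0 (pick_idx hn (upd om s i)) t *
     sqnorm (ada_nabla G x0 b G0 (pick_idx hn (upd om s i)) t.+1
             - avg_grad G (ada_x G x0 b G0 (pick_idx hn (upd om s i)) t.+1))
  <= n%:R * (ada_gamma G x0 b G0 (pick_idx hn om) t *
       sqnorm (ada_nabla G x0 b G0 (pick_idx hn om) t
               - avg_grad G (ada_x G x0 b G0 (pick_idx hn om) t)))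
     + n%:R * (L ^+ 2 * (ada_gamma G x0 b G0 (pick_idx hn om) t ^+ 3 *
       sqnorm (ada_nabla G x0 b G0 (pick_idx hn om) t))).
Proof.
have hst i : ada_state G x0 b G0 (pick_idx hn (upd om s i)) t
             = ada_state G x0 b G0 (pick_idx hn om) t.
  apply: state_dep => u hu; apply: pick_upd_other.
  by rewrite hs neq_ltn ltnS hu.
have hi i : pick_idx hn (upd om s i) t.+1 = i by rewrite -hs pick_upd_s.
rewrite /ada_gamma /ada_nabla /ada_x /=.
under eq_bigr => i _ do rewrite hst hi.
have := S_ge0 G x0 b G0 (pick_idx hn om) t.
case: (ada_state G x0 b G0 (pick_idx hn om) t) => [[x g] S] /= hS.
rewrite (negbTE hmod) -mulr_sumr.
have hgam : 0 < ada_step n b G0 S by apply: step_pos.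
set gam := ada_step n b G0 S in hgam *.
set x' := x - gam *: g.
have key : \sum_i sqnorm (G i x' - G i x + g - avg_grad G x')
   <= n%:R * sqnorm (g - avg_grad G x) + n%:R * (L ^+ 2 * gam ^+ 2 * sqnorm g).
  have eq i : G i x' - G i x + g - avg_grad G x' =
      (g - avg_grad G x) + (G i x' - G i x) - n%:R^-1 *: \sum_k (G k x' - G k x).
    rewrite sumrB scalerBr /avg_grad.
    move: (n%:R^-1 *: \sum_k G k x') (n%:R^-1 *: \sum_k G k x) => A B.
    by apply/rowP => j; rewrite !mxE; ring.
  under eq_bigr do rewrite eq.
  apply: le_trans (vec_var (g - avg_grad G x) (fun i => G i x' - G i x) hn) _.
  rewrite lerD2l.
  apply: (le_trans (y := \sum_(i < n) L ^+ 2 * gam ^+ 2 * sqnorm g)); last first.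
    by rewrite sumr_const card_ord mulr_natl.
  apply: ler_sum => i _.
  have h := hL i x' x.
  have h0 : 0 <= enorm (G i x' - G i x) by apply: sqrtr_ge0.
  have h1 : 0 <= enorm (x' - x) by apply: sqrtr_ge0.
  rewrite sqnorm_enorm.
  have -> : L ^+ 2 * gam ^+ 2 * sqnorm g = L ^+ 2 * enorm (x' - x) ^+ 2.
    by rewrite -sqnorm_enorm /x' sqnorm_step mulrA.
  nra.
have := ler_wpM2l (ltW hgam) key => h; apply: (le_trans h).
rewrite le_eqVlt; apply/orP; left; apply/eqP; ring.
Qed.

Theorem lemma5 (R : realType) (d n T : nat) (hn : (0 < n)%N) (hT : (0 < T)%N)
    (L : R) (f : 'I_n -> 'rV[R]_d -> R) (G : 'I_n -> 'rV[R]_d -> 'rV[R]_d)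
    (x0 : 'rV[R]_d) (beta0 G0 : R) :
  (forall i, is_gradient (f i) (G i)) ->
  (forall i, lipschitz_grad L (G i)) ->
  0 < beta0 -> 0 < G0 ->
  Eunif (fun omega : {ffun 'I_T -> 'I_n} =>
    \sum_(t < T)
      ada_gamma G x0 beta0 G0 (pick_idx hn omega) t *
      sqnorm (ada_nabla G x0 beta0 G0 (pick_idx hn omega) t
              - avg_grad G (ada_x G x0 beta0 G0 (pick_idx hn omega) t)))
  <= L ^+ 2 * n%:R *
     Eunif (fun omega : {ffun 'I_T -> 'I_n} =>
       \sum_(t < T)
         ada_gamma G x0 beta0 G0 (pick_idx hn omega) t ^+ 3 *
         sqnorm (ada_nabla G x0 beta0 G0 (pick_idx hn omega) t)).
Proof.
move=> _ hL hb hG.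
pose u (t : nat) := \sum_(om : {ffun 'I_T -> 'I_n})
   ada_gamma G x0 beta0 G0 (pick_idx hn om) t *
      sqnorm (ada_nabla G x0 beta0 G0 (pick_idx hn om) t
              - avg_grad G (ada_x G x0 beta0 G0 (pick_idx hn om) t)).
pose bb (t : nat) := L ^+ 2 * \sum_(om : {ffun 'I_T -> 'I_n})
   (ada_gamma G x0 beta0 G0 (pick_idx hn om) t ^+ 3 *
         sqnorm (ada_nabla G x0 beta0 G0 (pick_idx hn om) t)).
have hb0 t : 0 <= bb t.
  apply: mulr_ge0; first exact: sqr_ge0.
  apply: sumr_ge0 => om _; apply: mulr_ge0; last exact: sqnorm_ge0.
  by apply: exprn_ge0; apply: ltW; apply: gamma_pos.
have hu0 : u 0%N <= 0.
  rewrite /u big1 // => om _.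
  by rewrite /ada_nabla /ada_x /= subrr sqnorm0 mulr0.
have hrec t : (t.+1 < T)%N ->
    u t.+1 <= if (t.+1 %% n == 0)%N then 0 else u t + bb t.
  move=> ht; case: eqP => hm.
    rewrite /u big1 // => om _.
    rewrite /ada_nabla /ada_x /=.
    case: (ada_state G x0 beta0 G0 (pick_idx hn om) t) => [[x g] S] /=.
    by rewrite hm eqxx subrr sqnorm0 mulr0.
  pose s := Ordinal ht.
  apply: (le_trans (y := \sum_(om : {ffun 'I_T -> 'I_n})
     ada_gamma G x0 beta0 G0 (pick_idx hn om) t *
      sqnorm (ada_nabla G x0 beta0 G0 (pick_idx hn om) t.+1
              - avg_grad G (ada_x G x0 beta0 G0 (pick_idx hn om) t.+1)))).
    apply: ler_sum => om _; apply: ler_wpM2r; first exact: sqnorm_ge0.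
    exact: gamma_mono.
  rewrite -(ler_pM2l (_ : (0 : R) < n%:R)).
  have Hr := (resample hn s (fun om : {ffun 'I_T -> 'I_n} =>
     ada_gamma G x0 beta0 G0 (pick_idx hn om) t *
      sqnorm (ada_nabla G x0 beta0 G0 (pick_idx hn om) t.+1
              - avg_grad G (ada_x G x0 beta0 G0 (pick_idx hn om) t.+1)))).
  cbv beta in Hr; rewrite Hr.
    2: by rewrite ltr0n.
  have hm' : (t.+1 %% n != 0)%N by apply/eqP.
  apply: (le_trans (y := \sum_(om : {ffun 'I_T -> 'I_n})
    (n%:R * (ada_gamma G x0 beta0 G0 (pick_idx hn om) t *
       sqnorm (ada_nabla G x0 beta0 G0 (pick_idx hn om) t
               - avg_grad G (ada_x G x0 beta0 G0 (pick_idx hn om) t)))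
     + n%:R * (L ^+ 2 * (ada_gamma G x0 beta0 G0 (pick_idx hn om) t ^+ 3 *
       sqnorm (ada_nabla G x0 beta0 G0 (pick_idx hn om) t)))))).
    apply: ler_sum => om _.
    exact: (step_avg hn x0 hL hb hG om (s := s) (t := t) erefl hm').
  by rewrite big_split /= -!mulr_sumr mulrDr.
rewrite /Eunif mulrA; apply: ler_wpM2r; first by rewrite invr_ge0 ler0n.
rewrite exchange_big /= [X in _ <= _ * X]exchange_big /=.
have := seq_bound hn hb0 hu0 hrec => h; apply: (le_trans h).
by rewrite /bb -mulr_sumr mulrA [n%:R * _]mulrC.
Qed.
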